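(* Let $G$ be a finite group and $H$ a subgroup such that $\mathcal{O}_G(H)$ is Boolean, and let $A$ be an atom of $\mathcal{O}_G(H)$ with lattice complement $A^{\complement}$. If $K_1,K_2\in\mathcal{O}_{A^{\complement}}(H)$ with $K_1<K_2$, then $|K_1\vee A:K_1|\le|K_2\vee A:K_2|$. Equivalently, if $K_1,K_2\in\mathcal{O}_G(A)$ with $K_1<K_2$, then $|K_1:K_1\wedge A^{\complement}|\le|K_2:K_2\wedge A^{\complement}|$. Moreover, if $|G:A^{\complement}|=2$ then $|K\vee A:K|=2$ for all $K\in\mathcal{O}_{A^{\complement}}(H)$.
   Context: $\mathcal{O}_X(Y)=\{K\mid Y\le K\le X\}$, with $\vee$ the subgroup generated and $\wedge$ the intersection. Boolean means isomorphic to the lattice of subsets of a finite set. The lattice complement $K^{\complement}$ of $K\in\mathcal{O}_G(H)$ is the unique element with $K\wedge K^{\complement}=H$ and $K\vee K^{\complement}=G$. An atom is a minimal element of $\mathcal{O}_G(H)\setminus\{H\}$. *)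

(* Defs.v *)
From mathcomp Require Import all_boot all_fingroup.
Set Implicit Arguments. Unset Strict Implicit. Unset Printing Implicit Defensive.
Local Open Scope group_scope.

Definition in_interval (gT : finGroupType) (X Y K : {group gT}) : bool :=
  (Y \subset K) && (K \subset X).

(* O_G(H) is Boolean: order-isomorphic (hence lattice-isomorphic) to the
   lattice of all subsets of a finite set {0,...,n-1}. *)
Definition boolean_interval (gT : finGroupType) (G H : {group gT}) : Prop :=
  exists n : nat, exists f : {group gT} -> {set 'I_n},
    (forall K1 K2 : {group gT}, in_interval G H K1 -> in_interval G H K2 ->
        (K1 \subset K2) = (f K1 \subset f K2)) /\
    (forall S : {set 'I_n}, exists2 K : {group gT}, in_interval G H K & f K = S).

Definition is_atom (gT : finGroupType) (G H A : {group gT}) : Prop :=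
  [/\ in_interval G H A, A :!=: H &
      forall K : {group gT}, in_interval G H K -> K \subset A ->
        K :=: H \/ K :=: A].

Definition is_lcompl (gT : finGroupType) (G H K C : {group gT}) : Prop :=
  [/\ in_interval G H C, K :&: C = H & K <*> C = G].

(* Main.v *)
Require Import Defs.
From mathcomp Require Import all_boot all_fingroup.
Local Open Scope group_scope.

Lemma index_mono (gT : finGroupType) (X Y : {set gT}) (C : {group gT}) :
  X \subset Y -> (#|X : C| <= #|Y : C|)%N.
Proof. by move=> sXY; apply: subset_leq_card; apply: imsetS. Qed.

Theorem lemma10p6 (gT : finGroupType) (G H A Ac : {group gT}) :
  H \subset G ->
  boolean_interval G H ->
  is_atom G H A ->
  is_lcompl G H A Ac ->
  [/\ (forall K1 K2 : {group gT}, in_interval Ac H K1 -> in_interval Ac H K2 ->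
         K1 \proper K2 -> #|K1 <*> A : K1| <= #|K2 <*> A : K2|)%N,
      (forall K1 K2 : {group gT}, in_interval G A K1 -> in_interval G A K2 ->
         K1 \proper K2 -> #|K1 : K1 :&: Ac| <= #|K2 : K2 :&: Ac|)%N &
      (#|G : Ac| = 2%N ->
         forall K : {group gT}, in_interval Ac H K -> #|K <*> A : K| = 2%N)].
Proof.
move=> sHG [n [f [fmono fsurj]]] [/andP[sHA sAG] neAH minA] [/andP[sHAc sAcG] AIAc AAc].
have inI : forall K : {group gT}, (H \subset K) -> (K \subset G) -> in_interval G H K.
  by move=> K a b; apply/andP.
have fmeet : forall X Y : {group gT}, in_interval G H X -> in_interval G H Y ->
    in_interval G H (X :&: Y)%G -> f (X :&: Y)%G = f X :&: f Y.
  move=> X Y iX iY iM; apply/eqP; rewrite eqEsubset subsetI.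
  rewrite -!fmono // subsetIl subsetIr /=.
  have [K iK fK] := fsurj (f X :&: f Y).
  have sKX : K \subset X by rewrite fmono // fK subsetIl.
  have sKY : K \subset Y by rewrite fmono // fK subsetIr.
  by rewrite -fK -fmono // subsetI sKX.
have fjoin : forall X Y : {group gT}, in_interval G H X -> in_interval G H Y ->
    in_interval G H (X <*> Y)%G -> f (X <*> Y)%G = f X :|: f Y.
  move=> X Y iX iY iJ; apply/eqP; rewrite eqEsubset subUset.
  rewrite -!fmono // ?joing_subl ?joing_subr ?andbT.
  have [K iK fK] := fsurj (f X :|: f Y).
  have sXK : X \subset K by rewrite fmono // fK subsetUl.
  have sYK : Y \subset K by rewrite fmono // fK subsetUr.
  by rewrite -fK -fmono // join_subG sXK.
have iA : in_interval G H A by apply/andP.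
have iAc : in_interval G H Ac by apply/andP.
have iH : in_interval G H H by apply/andP.
have key : forall K1 K2 : {group gT}, in_interval Ac H K1 -> in_interval Ac H K2 ->
    K1 \subset K2 -> (K1 <*> A) :&: K2 = K1.
  move=> K1 K2 /andP[sH1 s1Ac] /andP[sH2 s2Ac] s12.
  have s1G : K1 \subset G := subset_trans s1Ac sAcG.
  have s2G : K2 \subset G := subset_trans s2Ac sAcG.
  have i1 := inI _ sH1 s1G; have i2 := inI _ sH2 s2G.
  have sJG : (K1 <*> A)%G \subset G by rewrite /= join_subG s1G.
  have sHJ : H \subset (K1 <*> A)%G by rewrite /= (subset_trans sH1) ?joing_subl.
  have iJ := inI _ sHJ sJG.
  have sHM : H \subset ((K1 <*> A) :&: K2)%G by rewrite /= subsetI sHJ.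
  have sMG : ((K1 <*> A) :&: K2)%G \subset G by rewrite /= (subset_trans (subsetIr _ _)).
  have iM := inI _ sHM sMG.
  apply/eqP; rewrite eqEsubset subsetI joing_subl s12 andbT.
  have -> : (K1 <*> A) :&: K2 = ((K1 <*> A) :&: K2)%G by [].
  rewrite fmono // (fmeet _ _ iJ i2 iM) (fjoin _ _ i1 iA iJ) setIUl.
  rewrite subUset subsetIl /=.
  have fH : f A :&: f Ac = f H.
    have <- : (A :&: Ac)%G = H by apply/val_inj; rewrite /= AIAc.
    rewrite fmeet //; apply/andP; split; rewrite /= ?AIAc //.
  have s2 : f K2 \subset f Ac by rewrite -fmono.
  rewrite andbT; apply: subset_trans (setIS (f A) s2) _; rewrite fH -fmono //.
have part1 : forall K1 K2 : {group gT}, in_interval Ac H K1 -> in_interval Ac H K2 ->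
    K1 \subset K2 -> (#|K1 <*> A : K1| <= #|K2 <*> A : K2|)%N.
  move=> K1 K2 i1 i2 s12.
  have -> : #|K1 <*> A : K1| = #|K1 <*> A : K2|.
    by rewrite -(indexgI (K1 <*> A)%G K2) /= key.
  apply: index_mono.
  by rewrite join_subG joing_subr (subset_trans s12) ?joing_subl.
split.
- by move=> K1 K2 i1 i2 /proper_sub; apply: part1.
- move=> K1 K2 _ _ /proper_sub s12; rewrite !indexgI; exact: index_mono.
- move=> idx K iK.
  have iAc' : in_interval Ac H Ac by apply/andP.
  have sKAc : K \subset Ac by case/andP: iK.
  have := part1 _ _ iK iAc' sKAc.
  have -> : #|Ac <*> A : Ac| = 2%N by rewrite joingC AAc.
  have : (1 < #|K <*> A : K|)%N.
    rewrite indexg_gt1; apply/negP => sJK.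
    have sAK : A \subset K := subset_trans (joing_subr _ _) sJK.
    case/negP: neAH; rewrite eqEsubset sHA andbT -AIAc subsetI subxx.
    exact: subset_trans sAK sKAc.
  case: #|_ : _| => [|[|[|m]]] //.
Qed.
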